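(* Let $z_n=(0,1/n)$, $n\in\mathbb{N}$, $O=(0,0)$, $K=\{z_n\}_{n\in\mathbb{N}}\cup\{O\}$, $Z=\mathbb{R}^2\setminus K$, and let $\Delta$ be the foliation of $Z$ whose leaves are the connected components of the intersections of $Z$ with horizontal lines $\mathbb{R}\times\{y\}$. Then every leaf of $\Delta$ admits a cross-section through it, but the family of special leaves of $\Delta$ is not locally finite. Consequently there is no striped atlas on $Z$ whose canonical foliation is $\Delta$.
   Context: For a leaf $\omega$ of a foliation $\Delta$ on a surface $Z$, let $J_\omega=[0,1)$ if $\omega\subset\partial Z$ and $J_\omega=(-1,1)$ otherwise; a cross-section through $\omega$ is a continuous map $\gamma:J_\omega\to Z$ with $\gamma(0)\in\omega$ such that $\gamma(s),\gamma(t)$ lie in distinct leaves for $s\ne t$. A subset is saturated if it is a union of leaves; $\hat\omega$ is the intersection of the closures of all saturated neighbourhoods of $\omega$; $\omega$ is special if $\omega\ne\hat\omega$. A striped atlas is a quotient map $q$ from an at most countable disjoint union of strips (sets $S$ with $\mathbb{R}\times(u,v)\subset S\subset\mathbb{R}\times[u,v]$ open in $\mathbb{R}\times[u,v]$) onto $Z$, gluing pairs $X_\gamma,Y_\gamma$ of mutually distinct boundary intervals (components of $S\cap(\mathbb{R}\times\{u,v\})$) via $q(X_\gamma)=q(Y_\gamma)$, injective elsewhere, with $q|_{X_\gamma},q|_{Y_\gamma}$ embeddings with closed images; its canonical foliation has as leaves the images of horizontal lines and boundary intervals of the strips. *)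

(* Defs.v *)
From Stdlib Require Import Reals List.
Open Scope R_scope.

Definition pt := (R * R)%type.

(* max-metric on R^2 (induces the usual topology) *)
Definition dist (p q : pt) : R :=
  Rmax (Rabs (fst p - fst q)) (Rabs (snd p - snd q)).

Definition is_open (U : pt -> Prop) : Prop :=
  forall p, U p -> exists eps, eps > 0 /\ forall r, dist p r < eps -> U r.

Definition Kset (p : pt) : Prop :=
  fst p = 0 /\ (snd p = 0 \/ exists n : nat, (1 <= n)%nat /\ snd p = / INR n).

Definition Zset (p : pt) : Prop := ~ Kset p.

(* the connected component containing p of the intersection of A with the
   horizontal line through p (connected subsets of a line = intervals) *)
Definition hcomp (A : pt -> Prop) (p : pt) : pt -> Prop :=
  fun q => A p /\ snd q = snd p /\
    forall x, Rmin (fst p) (fst q) <= x <= Rmax (fst p) (fst q) -> A (x, snd p).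

Definition leaf_of (p : pt) : pt -> Prop := hcomp Zset p.

Definition is_leaf (w : pt -> Prop) : Prop := exists p, Zset p /\ w = leaf_of p.

(* cross-section through w (Z is an open subset of the plane, so it has no
   boundary and J_w = (-1,1)) *)
Definition cross_section (w : pt -> Prop) (g : R -> pt) : Prop :=
  (forall s, -1 < s < 1 -> Zset (g s)) /\
  (forall s, -1 < s < 1 -> forall eps, eps > 0 -> exists del, del > 0 /\
     forall t, -1 < t < 1 -> Rabs (t - s) < del -> dist (g t) (g s) < eps) /\
  w (g 0) /\
  (forall s t, -1 < s < 1 -> -1 < t < 1 -> s <> t -> ~ leaf_of (g s) (g t)).

Definition saturated (A : pt -> Prop) : Prop :=
  (forall p, A p -> Zset p) /\ (forall p r, A p -> leaf_of p r -> A r).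

Definition nbhd_of_set (N w : pt -> Prop) : Prop :=
  exists U, is_open U /\ (forall p, U p -> Zset p) /\
    (forall p, w p -> U p) /\ (forall p, U p -> N p).

Definition closZ (A : pt -> Prop) (z : pt) : Prop :=
  Zset z /\ forall eps, eps > 0 -> exists a, A a /\ dist a z < eps.

Definition hat (w : pt -> Prop) : pt -> Prop :=
  fun z => forall N, saturated N -> nbhd_of_set N w -> closZ N z.

Definition special (w : pt -> Prop) : Prop := w <> hat w.

Definition locally_finite (F : (pt -> Prop) -> Prop) : Prop :=
  forall p, Zset p -> exists eps, eps > 0 /\ exists l : list (pt -> Prop),
    forall w, F w -> (exists r, w r /\ dist p r < eps) -> In w l.

Definition is_strip (u v : R) (S : pt -> Prop) : Prop :=
  u < v /\
  (forall x t, u < t < v -> S (x, t)) /\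
  (forall p, S p -> u <= snd p <= v) /\
  (forall p, S p -> exists eps, eps > 0 /\
     forall r, u <= snd r <= v -> dist p r < eps -> S r).

Definition is_bdry_int (u v : R) (S : pt -> Prop) (B : pt -> Prop) : Prop :=
  exists p, S p /\ (snd p = u \/ snd p = v) /\ B = hcomp S p.

Definition closed_embedding_on (B : pt -> Prop) (f : pt -> pt) : Prop :=
  (forall p p', B p -> B p' -> f p = f p' -> p = p') /\
  (forall p, B p -> forall eps, eps > 0 -> exists del, del > 0 /\
     forall p', B p' -> dist p p' < del -> dist (f p) (f p') < eps) /\
  (forall p, B p -> forall eps, eps > 0 -> exists del, del > 0 /\
     forall p', B p' -> dist (f p) (f p') < del -> dist p p' < eps) /\
  (forall z, Zset z ->
     (forall eps, eps > 0 -> exists p, B p /\ dist (f p) z < eps) ->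
     exists p, B p /\ f p = z).

(* Striped atlas on Z: the disjoint union of the strips S i (i : I, I at most
   countable) is modelled by pairs (i, p) with S i p; q i p is the image of
   (i,p).  The gluing data is a family (X g, Y g), g : G, of boundary
   intervals, each given as (index of the strip, interval). *)
Definition is_striped_atlas (I : Type) (u v : I -> R) (S : I -> pt -> Prop)
    (q : I -> pt -> pt) (G : Type) (X Y : G -> (I * (pt -> Prop))) : Prop :=
  (exists f : I -> nat, forall i j, f i = f j -> i = j) /\
  (forall i, is_strip (u i) (v i) (S i)) /\
  (forall i p, S i p -> Zset (q i p)) /\
  (forall z, Zset z -> exists i p, S i p /\ q i p = z) /\
  (forall U : pt -> Prop, (forall z, U z -> Zset z) ->
     (is_open U <->
      forall i p, S i p -> U (q i p) -> exists eps, eps > 0 /\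
        forall p', S i p' -> dist p p' < eps -> U (q i p'))) /\
  (forall g, is_bdry_int (u (fst (X g))) (v (fst (X g))) (S (fst (X g))) (snd (X g))) /\
  (forall g, is_bdry_int (u (fst (Y g))) (v (fst (Y g))) (S (fst (Y g))) (snd (Y g))) /\
  (forall g g', X g = X g' -> g = g') /\
  (forall g g', Y g = Y g' -> g = g') /\
  (forall g g', X g <> Y g') /\
  (forall g p, snd (X g) p -> exists p', snd (Y g) p' /\
      q (fst (X g)) p = q (fst (Y g)) p') /\
  (forall g p', snd (Y g) p' -> exists p, snd (X g) p /\
      q (fst (X g)) p = q (fst (Y g)) p') /\
  (forall g, closed_embedding_on (snd (X g)) (q (fst (X g)))) /\
  (forall g, closed_embedding_on (snd (Y g)) (q (fst (Y g)))) /\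
  (forall i p j p', S i p -> S j p' -> q i p = q j p' ->
     existT (fun _ => pt) i p <> existT (fun _ => pt) j p' ->
     exists g, (fst (X g) = i /\ snd (X g) p /\ fst (Y g) = j /\ snd (Y g) p') \/
               (fst (Y g) = i /\ snd (Y g) p /\ fst (X g) = j /\ snd (X g) p')).

Definition canonical_leaf (I : Type) (u v : I -> R) (S : I -> pt -> Prop)
    (q : I -> pt -> pt) (w : pt -> Prop) : Prop :=
  (exists i c, u i < c < v i /\ w = (fun z => exists x, q i (x, c) = z)) \/
  (exists i B, is_bdry_int (u i) (v i) (S i) B /\
     w = (fun z => exists p, B p /\ q i p = z)).

(* Main.v *)
Require Import Defs.
From Stdlib Require Import Reals List.
From Stdlib Require Import Lra Lia Classical FunctionalExtensionality PropExtensionality.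
Require Import Defs.
Open Scope R_scope.

Lemma dist_sym a b : dist a b = dist b a.
Proof. unfold dist. rewrite (Rabs_minus_sym (fst a)), (Rabs_minus_sym (snd a)). reflexivity. Qed.

Lemma dist_x a b : Rabs (fst a - fst b) <= dist a b.
Proof. unfold dist. apply Rmax_l. Qed.
Lemma dist_y a b : Rabs (snd a - snd b) <= dist a b.
Proof. unfold dist. apply Rmax_r. Qed.

Lemma dist_lt a b e : Rabs (fst a - fst b) < e -> Rabs (snd a - snd b) < e -> dist a b < e.
Proof. unfold dist. intros. apply Rmax_lub_lt; auto. Qed.

Lemma dist_tri a b c : dist a c <= dist a b + dist b c.
Proof.
  unfold dist. apply Rmax_lub.
  - eapply Rle_trans. 2: apply Rplus_le_compat; apply Rmax_l.
    replace (fst a - fst c) with ((fst a - fst b) + (fst b - fst c)) by ring. apply Rabs_triang.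
  - eapply Rle_trans. 2: apply Rplus_le_compat; apply Rmax_r.
    replace (snd a - snd c) with ((snd a - snd b) + (snd b - snd c)) by ring. apply Rabs_triang.
Qed.

Lemma dist_refl a : dist a a = 0.
Proof. unfold dist. rewrite !Rminus_diag, Rabs_R0. apply Rmax_left. lra. Qed.

Lemma dist_samex x y y' : dist (x, y) (x, y') = Rabs (y - y').
Proof. unfold dist; simpl. rewrite Rminus_diag, Rabs_R0. apply Rmax_right. apply Rabs_pos. Qed.

Lemma between_split a b c x :
  Rmin a c <= x <= Rmax a c ->
  (Rmin a b <= x <= Rmax a b) \/ (Rmin b c <= x <= Rmax b c).
Proof.
  unfold Rmin, Rmax. intros H.
  repeat destruct Rle_dec; lra.
Qed.

Lemma hc_sym A a b : hcomp A a b -> hcomp A b a.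
Proof.
  intros [Ha [Hs Hseg]]. destruct a as [a1 a2], b as [b1 b2]; simpl in *. subst b2.
  assert (Hb : A (b1, a2)).
  { apply Hseg. unfold Rmin, Rmax; repeat destruct Rle_dec; lra. }
  split; [exact Hb|]. split; [reflexivity|]. intros x Hx. apply Hseg.
  rewrite Rmin_comm, Rmax_comm. exact Hx.
Qed.

Lemma hc_trans A a b c : hcomp A a b -> hcomp A b c -> hcomp A a c.
Proof.
  intros [Ha [Hs Hseg]] [Hb [Hs' Hseg']].
  split; [exact Ha|]. split; [congruence|]. intros x Hx.
  destruct (between_split _ (fst b) _ _ Hx) as [H|H].
  - apply Hseg; exact H.
  - rewrite <- Hs. apply Hseg'; exact H.
Qed.

Lemma hc_refl A a : A a -> hcomp A a a.
Proof.
  intros Ha. split; [exact Ha|]. split; [reflexivity|]. intros x Hx.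
  assert (x = fst a) by (unfold Rmin, Rmax in Hx; destruct Rle_dec; lra).
  subst x. destruct a; exact Ha.
Qed.

Lemma hc_in A a b : hcomp A a b -> A b.
Proof. intros H. apply hc_sym in H. apply H. Qed.

Lemma hc_eq A a b : hcomp A a b -> hcomp A a = hcomp A b.
Proof.
  intros H. apply functional_extensionality; intro r. apply propositional_extensionality.
  split; intro H'.
  - eapply hc_trans; [apply hc_sym; exact H| exact H'].
  - eapply hc_trans; [exact H| exact H'].
Qed.

Lemma hc_snd A a b : hcomp A a b -> snd b = snd a.
Proof. intros [_ [H _]]; exact H. Qed.

Definition Kh (y : R) : Prop := y = 0 \/ exists n : nat, (1 <= n)%nat /\ y = / INR n.

Lemma Zset_x x y : x <> 0 -> Zset (x, y).
Proof. intros H [H1 _]. simpl in H1. auto. Qed.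

Lemma Zset_line x y : ~ Kh y -> Zset (x, y).
Proof. intros H [_ H1]. simpl in H1. auto. Qed.

Lemma nonK_above (n : nat) (e : R) : (1 <= n)%nat -> e > 0 ->
  exists y, / INR n < y < / INR n + e /\ ~ Kh y.
Proof.
  intros Hn He.
  assert (HN : 1 <= INR n) by (apply (le_INR 1); exact Hn).
  set (a := / INR n).
  assert (Ha : a > 0) by (unfold a; apply Rinv_0_lt_compat; lra).
  assert (HNa : INR n * a = 1) by (unfold a; field; lra).
  set (t := Rmin e (a * a) / 2).
  assert (Ht0 : 0 < t) by (unfold t; apply Rmin_case; nra).
  assert (Ht1 : t < e) by (unfold t; assert (Rmin e (a*a) <= e) by apply Rmin_l; lra).
  assert (Ht2 : t < a * a) by (unfold t; assert (Rmin e (a*a) <= a*a) by apply Rmin_r; nra).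
  exists (a + t). split; [lra|].
  intros [H0 | [m [Hm Hy]]]; [lra|].
  assert (HM : 1 <= INR m) by (apply (le_INR 1); exact Hm).
  assert (HMy : INR m * (a + t) = 1) by (rewrite Hy; field; lra).
  destruct (Nat.lt_total m n) as [Hlt | [Heq | Hgt]].
  - assert (INR m + 1 <= INR n) by (rewrite <- S_INR; apply le_INR; lia).
    nra.
  - subst m. nra.
  - assert (INR n + 1 <= INR m) by (rewrite <- S_INR; apply le_INR; lia).
    nra.
Qed.

Lemma leaf_eq w a : is_leaf w -> w a -> w = leaf_of a.
Proof. intros [p [_ ->]] H. apply hc_eq. exact H. Qed.

Lemma part1 : forall w, is_leaf w -> exists g : R -> pt, cross_section w g.
Proof.
  intros w [p [Hp ->]]. destruct p as [a b].
  set (a' := if Req_EM_T a 0 then 1 else a).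
  assert (Ha' : a' <> 0) by (unfold a'; destruct Req_EM_T; lra).
  exists (fun s => (a', b + s)). split; [|split; [|split]].
  - intros s _. apply Zset_x; exact Ha'.
  - intros s _ e He. exists e. split; [exact He|]. intros t _ Ht.
    rewrite dist_samex. replace (b + t - (b + s)) with (t - s) by ring. exact Ht.
  - rewrite Rplus_0_r. split; [exact Hp|]. split; [reflexivity|]. simpl.
    intros x Hx. unfold a' in *. destruct Req_EM_T as [E|E].
    + subst a. destruct (Req_EM_T x 0) as [->|Hx0]; [exact Hp|]. apply Zset_x; exact Hx0.
    + assert (x = a) by (unfold Rmin, Rmax in Hx; destruct Rle_dec; lra). subst x. exact Hp.
  - intros s t _ _ Hst [_ [H _]]. simpl in H. apply Hst. lra.
Qed.

Definition Rn (n : nat) : pt -> Prop := leaf_of (1, / INR n).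

Lemma Rn_inj n m : (1 <= n)%nat -> (1 <= m)%nat -> Rn n = Rn m -> n = m.
Proof.
  intros Hn Hm E.
  assert (H : Rn m (1, / INR n)).
  { rewrite <- E. apply hc_refl. apply Zset_x. lra. }
  destruct H as [_ [H _]]. simpl in H.
  assert (0 < INR n) by (apply lt_0_INR; lia).
  assert (0 < INR m) by (apply lt_0_INR; lia).
  apply INR_eq. rewrite <- (Rinv_inv (INR n)), <- (Rinv_inv (INR m)), H. reflexivity.
Qed.

Lemma avoid_list (f : nat -> pt -> Prop) :
  (forall n m, (1 <= n)%nat -> (1 <= m)%nat -> f n = f m -> n = m) ->
  forall l N, exists n, (N <= n)%nat /\ (1 <= n)%nat /\ ~ In (f n) l.
Proof.
  intros Hinj l. induction l as [|w l IH]; intros N.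
  - exists (Nat.max N 1). split; [lia|]. split; [lia|]. simpl; auto.
  - destruct (IH N) as [n1 [H1 [H1' H1'']]].
    destruct (classic (w = f n1)) as [E|E].
    + destruct (IH (S n1)) as [n2 [H2 [H2' H2'']]].
      exists n2. split; [lia|]. split; [lia|]. simpl. intros [E'|E']; [|auto].
      subst w. apply Hinj in E'; lia.
    + exists n1. split; [lia|]. split; [lia|]. simpl. intros [E'|E']; auto.
Qed.

Lemma Rn_special n : (1 <= n)%nat -> special (Rn n).
Proof.
  intros Hn E.
  assert (Hh : hat (Rn n) (-1, / INR n)).
  { intros N [_ Hsat] [U [Uo [UZ [wU UN]]]]. split; [apply Zset_x; lra|].
    intros e He.
    assert (HU : U (1, / INR n)) by (apply wU; apply hc_refl; apply Zset_x; lra).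
    destruct (Uo _ HU) as [d [Hd Hball]].
    destruct (nonK_above n (Rmin e d) Hn) as [y [Hy HK]].
    { apply Rmin_case; lra. }
    assert (Hmin1 : Rmin e d <= e) by apply Rmin_l.
    assert (Hmin2 : Rmin e d <= d) by apply Rmin_r.
    exists (-1, y). split.
    - apply (Hsat (1, y)).
      + apply UN. apply Hball. rewrite dist_samex. rewrite Rabs_left; lra.
      + split; [apply Zset_line; exact HK|]. split; [reflexivity|]. intros x _. apply Zset_line; exact HK.
    - rewrite dist_samex. rewrite Rabs_right; lra. }
  rewrite <- E in Hh. destruct Hh as [_ [_ Hseg]].
  apply (Hseg 0). simpl. unfold Rmin, Rmax; destruct Rle_dec; lra.
  simpl. split; [reflexivity|]. right. exists n. split; auto.
Qed.

Lemma part2 : ~ locally_finite (fun w => is_leaf w /\ special w).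
Proof.
  intros LF. destruct (LF (1, 0)) as [e [He [l Hl]]]. { apply Zset_x; lra. }
  destruct (archimed_cor1 e He) as [N [HN HN0]].
  destruct (avoid_list Rn Rn_inj l N) as [n [Hn1 [Hn2 Hn3]]].
  apply Hn3. apply Hl.
  - split; [|apply Rn_special; exact Hn2]. exists (1, / INR n). split; [apply Zset_x; lra|reflexivity].
  - exists (1, / INR n). split; [apply hc_refl; apply Zset_x; lra|].
    rewrite dist_samex.
    assert (0 < INR N) by (apply lt_0_INR; lia).
    assert (INR N <= INR n) by (apply le_INR; exact Hn1).
    assert (/ INR n <= / INR N) by (apply Rinv_le_contravar; lra).
    assert (0 < / INR n) by (apply Rinv_0_lt_compat; lra).
    rewrite Rabs_left; lra.
Qed.

Lemma bd_props (a b : R) (T : pt -> Prop) B x :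
  is_bdry_int a b T B -> B x -> T x /\ (snd x = a \/ snd x = b).
Proof.
  intros [p [Hp [Hs ->]]] Hx. split.
  - eapply hc_in; exact Hx.
  - apply hc_snd in Hx. rewrite Hx. exact Hs.
Qed.

Section Atlas.
Variables (I : Type) (u v : I -> R) (S : I -> pt -> Prop) (q : I -> pt -> pt)
  (G : Type) (X Y : G -> (I * (pt -> Prop))).
Hypothesis Hat : is_striped_atlas I u v S q G X Y.
Hypothesis Hiff : forall w, is_leaf w <-> canonical_leaf I u v S q w.

Lemma at_strip i : is_strip (u i) (v i) (S i).
Proof. destruct Hat as (_&H&_). apply H. Qed.
Lemma at_Z i p : S i p -> Zset (q i p).
Proof. destruct Hat as (_&_&H&_). apply H. Qed.
Lemma at_surj z : Zset z -> exists i p, S i p /\ q i p = z.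
Proof. destruct Hat as (_&_&_&H&_). apply H. Qed.
Lemma at_quot : forall U : pt -> Prop, (forall z, U z -> Zset z) ->
     (is_open U <->
      forall i p, S i p -> U (q i p) -> exists eps, eps > 0 /\
        forall p', S i p' -> dist p p' < eps -> U (q i p')).
Proof. destruct Hat as (_&_&_&_&H&_). apply H. Qed.
Lemma at_Xb g : is_bdry_int (u (fst (X g))) (v (fst (X g))) (S (fst (X g))) (snd (X g)).
Proof. destruct Hat as (_&_&_&_&_&H&_). apply H. Qed.
Lemma at_Yb g : is_bdry_int (u (fst (Y g))) (v (fst (Y g))) (S (fst (Y g))) (snd (Y g)).
Proof. destruct Hat as (_&_&_&_&_&_&H&_). apply H. Qed.
Lemma at_Xinj g g' : X g = X g' -> g = g'.
Proof. destruct Hat as (_&_&_&_&_&_&_&H&_). apply H. Qed.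
Lemma at_Yinj g g' : Y g = Y g' -> g = g'.
Proof. destruct Hat as (_&_&_&_&_&_&_&_&H&_). apply H. Qed.
Lemma at_XY g p : snd (X g) p -> exists p', snd (Y g) p' /\
      q (fst (X g)) p = q (fst (Y g)) p'.
Proof. destruct Hat as (_&_&_&_&_&_&_&_&_&_&H&_). apply H. Qed.
Lemma at_YX g p' : snd (Y g) p' -> exists p, snd (X g) p /\
      q (fst (X g)) p = q (fst (Y g)) p'.
Proof. destruct Hat as (_&_&_&_&_&_&_&_&_&_&_&H&_). apply H. Qed.
Lemma at_Xe g : closed_embedding_on (snd (X g)) (q (fst (X g))).
Proof. destruct Hat as (_&_&_&_&_&_&_&_&_&_&_&_&H&_). apply H. Qed.
Lemma at_Ye g : closed_embedding_on (snd (Y g)) (q (fst (Y g))).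
Proof. destruct Hat as (_&_&_&_&_&_&_&_&_&_&_&_&_&H&_). apply H. Qed.
Lemma at_inj i p j p' : S i p -> S j p' -> q i p = q j p' ->
     existT (fun _ => pt) i p <> existT (fun _ => pt) j p' ->
     exists g, (fst (X g) = i /\ snd (X g) p /\ fst (Y g) = j /\ snd (Y g) p') \/
               (fst (Y g) = i /\ snd (Y g) p /\ fst (X g) = j /\ snd (X g) p').
Proof. destruct Hat as (_&_&_&_&_&_&_&_&_&_&_&_&_&_&H). apply H. Qed.

Lemma strip_bounds i p : S i p -> u i <= snd p <= v i.
Proof. destruct (at_strip i) as (_&_&H&_). apply H. Qed.

Lemma strip_int i p : u i < snd p < v i -> S i p.
Proof. destruct (at_strip i) as (_&H&_). destruct p. apply H. Qed.

Lemma interior_unique k p k' p' : S k p -> u k < snd p < v k -> S k' p' ->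
  q k p = q k' p' -> k = k' /\ p = p'.
Proof.
  intros Sp Hint Sp' E.
  destruct (classic (existT (fun _ => pt) k p = existT (fun _ => pt) k' p')) as [E'|E'].
  - split. exact (f_equal (@projT1 _ _) E'). exact (f_equal (fun s : {x : I & pt} => (projT2 s : pt)) E').
  - destruct (at_inj _ _ _ _ Sp Sp' E E') as [g [(H1&H2&_)|(H1&H2&_)]].
    + destruct (bd_props _ _ _ _ _ (at_Xb g) H2) as [_ Hb]. rewrite H1 in Hb. lra.
    + destruct (bd_props _ _ _ _ _ (at_Yb g) H2) as [_ Hb]. rewrite H1 in Hb. lra.
Qed.

Definition good (eta : R) k p d : Prop :=
  0 < d /\ d <= eta /\
  (forall r : pt, u k <= snd r <= v k -> dist p r < d -> S k r) /\
  (forall r : pt, S k r -> dist p r < d -> (snd r = u k \/ snd r = v k) -> snd r = snd p).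

Lemma good_ex eta k p : 0 < eta -> S k p -> exists d, good eta k p d.
Proof.
  intros He Sp.
  destruct (at_strip k) as (Huv&_&_&Hop).
  destruct (Hop p Sp) as [e [He0 He1]].
  pose proof (strip_bounds _ _ Sp) as Hb.
  assert (Hg : exists gam, 0 < gam /\ forall r : pt, (snd r = u k \/ snd r = v k) ->
             Rabs (snd p - snd r) < gam -> snd r = snd p).
  { destruct (Req_EM_T (snd p) (u k)) as [E|E].
    - exists (v k - u k). split; [lra|]. intros r [H|H] Ha; [congruence|].
      rewrite H, E in Ha. rewrite Rabs_left in Ha; lra.
    - destruct (Req_EM_T (snd p) (v k)) as [E'|E'].
      + exists (v k - u k). split; [lra|]. intros r [H|H] Ha; [|congruence].
        rewrite H, E' in Ha. rewrite Rabs_right in Ha; lra.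
      + exists (Rmin (snd p - u k) (v k - snd p)). split.
        { apply Rmin_case; lra. }
        intros r [H|H] Ha; rewrite H in Ha.
        * assert (Rmin (snd p - u k) (v k - snd p) <= snd p - u k) by apply Rmin_l.
          rewrite Rabs_right in Ha; lra.
        * assert (Rmin (snd p - u k) (v k - snd p) <= v k - snd p) by apply Rmin_r.
          rewrite Rabs_left in Ha; lra. }
  destruct Hg as [gam [Hg0 Hg1]].
  set (d := Rmin (Rmin e eta) gam).
  assert (d <= Rmin e eta) by apply Rmin_l.
  assert (d <= gam) by apply Rmin_r.
  assert (Rmin e eta <= e) by apply Rmin_l.
  assert (Rmin e eta <= eta) by apply Rmin_r.
  assert (0 < d) by (unfold d; repeat apply Rmin_case; lra).
  exists d. split; [lra|]. split; [lra|]. split.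
  - intros r Hr Hd. apply He1; auto. lra.
  - intros r _ Hd Hr. apply Hg1; auto. pose proof (dist_y p r). lra.
Qed.

Lemma good_hc eta k p d p' : good eta k p d -> S k p -> S k p' -> dist p p' < d ->
  (snd p' = u k \/ snd p' = v k) -> hcomp (S k) p p'.
Proof.
  intros (Hd0&_&Hop&Hbd) Sp Sp' Hd Hb.
  pose proof (Hbd p' Sp' Hd Hb) as Es.
  split; [exact Sp|]. split; [exact Es|]. intros x Hx.
  apply Hop. simpl. apply strip_bounds; exact Sp.
  eapply Rle_lt_trans; [|exact Hd].
  unfold dist; simpl. rewrite Rminus_diag, Rabs_R0.
  apply Rmax_lub; [|apply Rle_trans with (Rabs (fst p - fst p')); [apply Rabs_pos|apply Rmax_l]].
  eapply Rle_trans; [|apply Rmax_l].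
  unfold Rmin, Rmax in Hx. destruct Rle_dec.
  all: unfold Rabs; repeat destruct Rcase_abs; lra.
Qed.

Definition Aset eta z0 k r : Prop :=
  exists p d, S k p /\ q k p = z0 /\ good eta k p d /\ dist p r < d.

Lemma A_open eta z0 k r : Aset eta z0 k r ->
  exists rho, rho > 0 /\ forall r', dist r r' < rho -> Aset eta z0 k r'.
Proof.
  intros [p [d (Sp&Eq&Hg&Hd)]]. exists (d - dist p r). split; [lra|].
  intros r' Hr'. exists p, d. split; [exact Sp|]. split; [exact Eq|]. split; [exact Hg|].
  pose proof (dist_tri p r r'). lra.
Qed.

Definition Uset eta z0 z : Prop :=
  Zset z /\ forall k r, S k r -> q k r = z -> Aset eta z0 k r.


Lemma XL eta z0 i p : S i p -> Uset eta z0 (q i p) ->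
  exists e, e > 0 /\ forall g p' k r, X g = (i, hcomp (S i) p) ->
    snd (Y g) r -> fst (Y g) = k -> hcomp (S i) p p' -> q i p' = q k r ->
    dist p p' < e -> Aset eta z0 k r.
Proof.
  intros Sp [_ HU].
  destruct (classic (exists g, X g = (i, hcomp (S i) p))) as [[g0 Hg0]|Hno].
  - destruct (at_XY g0 p) as [ps [Hps Eps]].
    { rewrite Hg0; simpl. apply hc_refl; exact Sp. }
    rewrite Hg0 in Eps; simpl in Eps.
    destruct (bd_props _ _ _ _ _ (at_Yb g0) Hps) as [Sps _].
    assert (Aps : Aset eta z0 (fst (Y g0)) ps) by (apply HU; auto).
    destruct (A_open _ _ _ _ Aps) as [rho [Hrho Hrho']].
    destruct (at_Ye g0) as (_&_&Hic&_).
    destruct (Hic ps Hps rho Hrho) as [del [Hdel Hdel']].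
    pose proof (at_Xe g0) as HXe. rewrite Hg0 in HXe. simpl in HXe.
    destruct HXe as (_&Hc&_).
    destruct (Hc p (hc_refl _ _ Sp) del Hdel) as [del2 [Hdel2 Hdel2']].
    exists del2. split; [exact Hdel2|].
    intros g p' k r Hg Hr Hk Hp' Eq Hd.
    assert (g = g0) by (apply at_Xinj; congruence). subst g k.
    apply Hrho'. apply Hdel'; [exact Hr|].
    rewrite <- Eps, <- Eq. apply Hdel2'; assumption.
  - exists 1. split; [lra|]. intros g p' k r Hg. exfalso. apply Hno. exists g; exact Hg.
Qed.

Lemma YL eta z0 i p : S i p -> Uset eta z0 (q i p) ->
  exists e, e > 0 /\ forall g p' k r, Y g = (i, hcomp (S i) p) ->
    snd (X g) r -> fst (X g) = k -> hcomp (S i) p p' -> q i p' = q k r ->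
    dist p p' < e -> Aset eta z0 k r.
Proof.
  intros Sp [_ HU].
  destruct (classic (exists g, Y g = (i, hcomp (S i) p))) as [[g0 Hg0]|Hno].
  - destruct (at_YX g0 p) as [ps [Hps Eps]].
    { rewrite Hg0; simpl. apply hc_refl; exact Sp. }
    rewrite Hg0 in Eps; simpl in Eps.
    destruct (bd_props _ _ _ _ _ (at_Xb g0) Hps) as [Sps _].
    assert (Aps : Aset eta z0 (fst (X g0)) ps) by (apply HU; auto).
    destruct (A_open _ _ _ _ Aps) as [rho [Hrho Hrho']].
    destruct (at_Xe g0) as (_&_&Hic&_).
    destruct (Hic ps Hps rho Hrho) as [del [Hdel Hdel']].
    pose proof (at_Ye g0) as HYe. rewrite Hg0 in HYe. simpl in HYe.
    destruct HYe as (_&Hc&_).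
    destruct (Hc p (hc_refl _ _ Sp) del Hdel) as [del2 [Hdel2 Hdel2']].
    exists del2. split; [exact Hdel2|].
    intros g p' k r Hg Hr Hk Hp' Eq Hd.
    assert (g = g0) by (apply at_Yinj; congruence). subst g k.
    apply Hrho'. apply Hdel'; [exact Hr|].
    rewrite Eps, <- Eq. apply Hdel2'; assumption.
  - exists 1. split; [lra|]. intros g p' k r Hg. exfalso. apply Hno. exists g; exact Hg.
Qed.

Lemma pair_eta (a : I * (pt -> Prop)) : a = (fst a, snd a).
Proof. destruct a; reflexivity. Qed.

Lemma U_open eta z0 : 0 < eta -> is_open (Uset eta z0).
Proof.
  intros Heta. apply (proj2 (at_quot (Uset eta z0) (fun z H => proj1 H))).
  intros i p Sp HUp.
  destruct (A_open _ _ _ _ (proj2 HUp i p Sp eq_refl)) as [r0 [Hr0 Hr0']].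
  destruct (good_ex eta i p Heta Sp) as [d1 Hg1].
  destruct (XL eta z0 i p Sp HUp) as [eX [HeX HeX']].
  destruct (YL eta z0 i p Sp HUp) as [eY [HeY HeY']].
  set (e := Rmin (Rmin r0 d1) (Rmin eX eY)).
  assert (e <= Rmin r0 d1) by apply Rmin_l.
  assert (e <= Rmin eX eY) by apply Rmin_r.
  assert (Rmin r0 d1 <= r0) by apply Rmin_l.
  assert (Rmin r0 d1 <= d1) by apply Rmin_r.
  assert (Rmin eX eY <= eX) by apply Rmin_l.
  assert (Rmin eX eY <= eY) by apply Rmin_r.
  assert (Hd10 : 0 < d1) by apply Hg1.
  exists e. split. { unfold e; repeat apply Rmin_case; lra. }
  intros p' Sp' Hd. split; [apply at_Z; exact Sp'|].
  intros k r Sr Eq.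
  destruct (classic (existT (fun _ => pt) i p' = existT (fun _ => pt) k r)) as [E|E].
  - assert (i = k) by exact (f_equal (@projT1 _ _) E).
    assert (p' = r) by exact (f_equal (fun s : {x : I & pt} => (projT2 s : pt)) E).
    subst. apply Hr0'. lra.
  - destruct (at_inj _ _ _ _ Sp' Sr (eq_sym Eq) E) as [g [(J1&J2&J3&J4)|(J1&J2&J3&J4)]].
    + pose proof (at_Xb g) as Hb. destruct Hb as [p0 [Sp0 [Hs0 Hb0]]].
      rewrite J1 in Sp0, Hs0, Hb0.
      assert (Hp0 : hcomp (S i) p0 p') by (rewrite <- Hb0; exact J2).
      assert (Hbd : snd p' = u i \/ snd p' = v i) by (rewrite (hc_snd _ _ _ Hp0); exact Hs0).
      assert (Hpp : hcomp (S i) p p') by (eapply good_hc; eauto; lra).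
      apply (HeX' g p' k r); auto; [|lra].
      rewrite (pair_eta (X g)), J1, Hb0, (hc_eq _ _ _ Hp0), (hc_eq _ _ _ Hpp). reflexivity.
    + pose proof (at_Yb g) as Hb. destruct Hb as [p0 [Sp0 [Hs0 Hb0]]].
      rewrite J1 in Sp0, Hs0, Hb0.
      assert (Hp0 : hcomp (S i) p0 p') by (rewrite <- Hb0; exact J2).
      assert (Hbd : snd p' = u i \/ snd p' = v i) by (rewrite (hc_snd _ _ _ Hp0); exact Hs0).
      assert (Hpp : hcomp (S i) p p') by (eapply good_hc; eauto; lra).
      apply (HeY' g p' k r); auto; [|lra].
      rewrite (pair_eta (Y g)), J1, Hb0, (hc_eq _ _ _ Hp0), (hc_eq _ _ _ Hpp). reflexivity.
Qed.

Lemma LOC eta z0 : 0 < eta -> Zset z0 -> exists e, e > 0 /\ forall z, dist z0 z < e ->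
  forall k r, S k r -> q k r = z -> exists p d, S k p /\ q k p = z0 /\ good eta k p d /\ dist p r < d.
Proof.
  intros Heta Hz.
  assert (HU : Uset eta z0 z0).
  { split; [exact Hz|]. intros k r Sr Eq. destruct (good_ex eta k r Heta Sr) as [d Hd].
    exists r, d. split; [exact Sr|]. split; [exact Eq|]. split; [exact Hd|].
    rewrite dist_refl. apply Hd. }
  destruct (U_open eta z0 Heta z0 HU) as [e [He He']].
  exists e. split; [exact He|]. intros z Hz' k r Sr Eq.
  apply (proj2 (He' z Hz') k r Sr Eq).
Qed.

Lemma line_leaf j p : u j < snd p < v j ->
  (fun z => exists x, q j (x, snd p) = z) = leaf_of (q j p).
Proof.
  intros Hp. apply leaf_eq.
  - apply Hiff. left. exists j, (snd p). split; [exact Hp|reflexivity].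
  - exists (fst p). destruct p; reflexivity.
Qed.

Lemma bd_leaf i B b : is_bdry_int (u i) (v i) (S i) B -> B b ->
  (fun z => exists p, B p /\ q i p = z) = leaf_of (q i b).
Proof.
  intros HB Hb. apply leaf_eq.
  - apply Hiff. right. exists i, B. split; [exact HB|reflexivity].
  - exists b. split; [exact Hb|reflexivity].
Qed.

Lemma F2 n j p : (1 <= n)%nat -> S j p -> q j p = (1, / INR n) ->
  snd p = u j \/ snd p = v j.
Proof.
  intros Hn Sp Eqp.
  assert (HN : 1 <= INR n) by (apply (le_INR 1); exact Hn).
  assert (Hh : 0 < / INR n) by (apply Rinv_0_lt_compat; lra).
  set (h := / INR n) in *.
  apply NNPP; intro Hnot.
  pose proof (strip_bounds _ _ Sp) as Hb.
  assert (Hint : u j < snd p < v j).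
  { destruct Hb as [B1 B2]. destruct B1 as [B1|B1]; [|exfalso; apply Hnot; auto].
    destruct B2 as [B2|B2]; [|exfalso; apply Hnot; auto]. lra. }
  set (c := snd p) in *.
  set (gap := Rmin (c - u j) (v j - c)).
  assert (Hgap1 : gap <= c - u j) by apply Rmin_l.
  assert (Hgap2 : gap <= v j - c) by apply Rmin_r.
  assert (Hgap : 0 < gap) by (unfold gap; apply Rmin_case; lra).
  assert (HC : forall eta, 0 < eta -> 2 * eta <= gap -> exists p', S j p' /\
     u j < snd p' < v j /\ q j p' = (-1, h) /\ Rabs (snd p' - c) < 2 * eta).
  { intros eta He He2.
    destruct (LOC eta (1, h) He (Zset_x 1 h ltac:(lra))) as [e1 [Ke1 L1]].
    destruct (LOC eta (-1, h) He (Zset_x (-1) h ltac:(lra))) as [e2 [Ke2 L2]].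
    destruct (nonK_above n (Rmin e1 e2) Hn) as [y [Hy HK]]. { apply Rmin_case; lra. }
    assert (Rmin e1 e2 <= e1) by apply Rmin_l.
    assert (Rmin e1 e2 <= e2) by apply Rmin_r.
    fold h in Hy.
    destruct (at_surj (1, y) (Zset_x 1 y ltac:(lra))) as [k1 [r1 [Sr1 Eq1]]].
    destruct (L1 (1, y)) with (2 := Sr1) (3 := Eq1) as [p0 [d0 (Sp0&Eqp0&Hg0&Hd0)]].
    { rewrite dist_samex. rewrite Rabs_left; lra. }
    destruct (interior_unique _ _ _ _ Sp Hint Sp0 (eq_trans Eqp (eq_sym Eqp0))) as [<- <-].
    destruct Hg0 as (Hd00 & Hdeta & _).
    pose proof (dist_y p r1) as Hy1. fold c in Hy1.
    assert (Hr1 : u j < snd r1 < v j).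
    { revert Hy1; unfold Rabs; destruct Rcase_abs; intros; lra. }
    pose proof (line_leaf j r1 Hr1) as LL. rewrite Eq1 in LL.
    assert (Hw2 : leaf_of (1, y) (-1, y)).
    { split; [apply Zset_line; exact HK|]. split; [reflexivity|].
      intros x _. apply Zset_line; exact HK. }
    rewrite <- LL in Hw2. destruct Hw2 as [x' Eqx'].
    destruct (L2 (-1, y)) with (k := j) (r := (x', snd r1)) as [p' [d' (Sp'&Eqp'&Hg'&Hd')]].
    { rewrite dist_samex. rewrite Rabs_left; lra. }
    { apply strip_int; exact Hr1. }
    { exact Eqx'. }
    destruct Hg' as (_ & Hd'eta & _).
    pose proof (dist_y p' (x', snd r1)) as Hy2. simpl in Hy2.
    exists p'. split; [exact Sp'|].
    assert (Rabs (snd p' - c) < 2 * eta).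
    { revert Hy1 Hy2. unfold Rabs; repeat destruct Rcase_abs; intros; lra. }
    split; [|split; [exact Eqp'|assumption]].
    revert H1. unfold Rabs; destruct Rcase_abs; intros; lra. }
  destruct (HC (gap / 2)) as [p1 (Sp1 & Hp1 & Eq1 & Hc1)]; [lra|lra|].
  assert (Hc : snd p1 = c).
  { apply NNPP; intro Hne.
    set (dd := Rabs (snd p1 - c)).
    assert (Hdd : 0 < dd) by (apply Rabs_pos_lt; lra).
    set (eta := Rmin (gap / 2) (dd / 4)).
    assert (eta <= gap / 2) by apply Rmin_l.
    assert (eta <= dd / 4) by apply Rmin_r.
    destruct (HC eta) as [p2 (Sp2 & Hp2 & Eq2 & Hc2)].
    { unfold eta; apply Rmin_case; lra. }
    { lra. }
    destruct (interior_unique _ _ _ _ Sp1 Hp1 Sp2 (eq_trans Eq1 (eq_sym Eq2))) as [_ <-].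
    fold dd in Hc2. lra. }
  pose proof (line_leaf j p Hint) as LL. rewrite Eqp in LL.
  assert (Hin : leaf_of (1, h) (-1, h)).
  { rewrite <- LL. exists (fst p1). fold c. rewrite <- Hc. destruct p1; exact Eq1. }
  destruct Hin as [_ [_ Hseg]]. apply (Hseg 0).
  - simpl. unfold Rmin, Rmax; destruct Rle_dec; lra.
  - split; [reflexivity|]. right. exists n. split; [exact Hn|reflexivity].
Qed.

Lemma atlas_False : False.
Proof.
  destruct (LOC 1 (1, 0) ltac:(lra) (Zset_x 1 0 ltac:(lra))) as [e [He L]].
  destruct (archimed_cor1 e He) as [m [Hm Hm0]].
  assert (HM : 0 < INR m) by (apply lt_0_INR; lia).
  assert (Hmi : 0 < / INR m) by (apply Rinv_0_lt_compat; lra).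
  destruct (at_surj (1, / INR m) (Zset_x 1 _ ltac:(lra))) as [i [b [Sb Eqb]]].
  pose proof (F2 m i b ltac:(lia) Sb Eqb) as Hbb.
  destruct (L (1, / INR m)) with (2 := Sb) (3 := Eqb) as [p [d (Sp & Eqp & Hg & Hd)]].
  { rewrite dist_samex. rewrite Rabs_left; lra. }
  assert (Hpb : hcomp (S i) p b) by (eapply good_hc; eauto).
  assert (HB : is_bdry_int (u i) (v i) (S i) (hcomp (S i) p)).
  { exists p. split; [exact Sp|]. split; [|reflexivity]. rewrite <- (hc_snd _ _ _ Hpb). exact Hbb. }
  pose proof (bd_leaf i _ b HB Hpb) as BL. rewrite Eqb in BL.
  assert (Hin : leaf_of (1, / INR m) (1, 0)).
  { rewrite <- BL. exists p. split; [apply hc_refl; exact Sp|exact Eqp]. }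
  apply hc_snd in Hin. simpl in Hin. lra.
Qed.

End Atlas.

Theorem mainTheorem9 :
  (forall w, is_leaf w -> exists g : R -> pt, cross_section w g) /\
  ~ locally_finite (fun w => is_leaf w /\ special w) /\
  (forall (I : Type) (u v : I -> R) (S : I -> pt -> Prop) (q : I -> pt -> pt)
          (G : Type) (X Y : G -> (I * (pt -> Prop))),
     is_striped_atlas I u v S q G X Y ->
     ~ (forall w, is_leaf w <-> canonical_leaf I u v S q w)).
Proof.
  split; [exact part1|]. split; [exact part2|].
  intros I u v S q G X Y Hat Hiff. exact (atlas_False I u v S q G X Y Hat Hiff).
Qed.
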